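(* Let $f:\mathbb R^n\to\mathbb R^n$ satisfy the QUAD condition with constant $\delta>0$, let $\epsilon_1,\epsilon_2>0$, $0<p<1$, $q>1$, and let $s:[0,\infty)\to\mathbb R^n$ satisfy $\dot s=f(s)$. Consider $$\dot x=f(x)-\epsilon_1\mathrm{sig}^p(x-s)-\epsilon_2\mathrm{sig}^q(x-s),\qquad x(t)\in\mathbb R^n.$$ Let $\bar\alpha=\epsilon_1 2^{(1+p)/2}$ and $\bar\beta=\epsilon_2 n^{(1-q)/2}2^{(1+q)/2}$. If $\bar\alpha-2\delta>0$ and $\bar\beta-2\delta>0$, then for every initial condition and every solution, $x(t)=s(t)$ for all $t\ge T_{\max}=\frac{2}{(\bar\alpha-2\delta)(1-p)}+\frac{2}{(\bar\beta-2\delta)(q-1)}$.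
   Context: For $x\in\mathbb R^n$ and $r>0$, $\mathrm{sig}^r(x)=(\mathrm{sign}(x^1)|x^1|^r,\dots,\mathrm{sign}(x^n)|x^n|^r)^T$. QUAD condition with constant $\delta>0$: $(x-y)^T(f(x)-f(y))\le\delta(x-y)^T(x-y)$ for all $x,y\in\mathbb R^n$. *)

(* Defs.v *)
From Stdlib Require Import Reals.
From mathcomp Require Import ssreflect ssrbool eqtype ssrnat seq fintype.
Set Implicit Arguments.
Unset Strict Implicit.
Open Scope R_scope.

Definition vec (n : nat) := 'I_n -> R.

Definition vsum (n : nat) (g : 'I_n -> R) : R :=
  foldr Rplus 0 (map g (enum 'I_n)).

Definition dotv (n : nat) (x y : vec n) : R := vsum (fun i => x i * y i).

Definition vsub (n : nat) (x y : vec n) : vec n := fun i => x i - y i.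

Definition QUAD (n : nat) (f : vec n -> vec n) (delta : R) : Prop :=
  forall x y : vec n,
    dotv (vsub x y) (vsub (f x) (f y)) <= delta * dotv (vsub x y) (vsub x y).

Definition sigpow1 (r a : R) : R :=
  if Rlt_dec 0 a then Rpower a r
  else if Rlt_dec a 0 then - Rpower (- a) r else 0.

Definition sigpow (n : nat) (r : R) (x : vec n) : vec n :=
  fun i => sigpow1 r (x i).

Definition is_solution (n : nat) (F : R -> vec n -> vec n) (x : R -> vec n) : Prop :=
  (forall t, 0 < t -> forall i : 'I_n,
      derivable_pt_lim (fun u => x u i) t (F t (x t) i)) /\
  (forall i : 'I_n, forall eps, 0 < eps -> exists d, 0 < d /\
      forall t, 0 <= t < d -> Rabs (x t i - x 0 i) < eps).

(* Main.v *)
Require Import Defs.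
From Stdlib Require Import Reals Lra Psatz.
From Coquelicot Require Import Coquelicot.
From mathcomp Require Import ssreflect ssrbool eqtype ssrnat seq fintype.
Open Scope R_scope.
Set Implicit Arguments.
Unset Strict Implicit.

Lemma exp_le_mono x y : x <= y -> exp x <= exp y.
Proof. intros [H|H]. left; apply exp_increasing; auto. subst; lra. Qed.

Lemma ln_le0 w : 0 < w -> w <= 1 -> ln w <= 0.
Proof. intros H1 [H2|H2]. rewrite -ln_1; left; apply ln_increasing; lra.
  subst; rewrite ln_1; lra. Qed.

Lemma ln_ge0 w : 1 <= w -> 0 <= ln w.
Proof. intros [H2|H2]. rewrite -ln_1; left; apply ln_increasing; lra.
  subst; rewrite ln_1; lra. Qed.

Lemma ln_gt0 w : 1 < w -> 0 < ln w.
Proof. intros H2. rewrite -ln_1; apply ln_increasing; lra. Qed.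

Lemma rp_pos x y : 0 < Rpower x y.
Proof. unfold Rpower; apply exp_pos. Qed.

Lemma rp_ge_self w r : 0 < w -> ((w <= 1 /\ r <= 1) \/ (1 <= w /\ 1 <= r)) ->
  w <= Rpower w r.
Proof.
  intros Hw H. rewrite -{1}(exp_ln w Hw). unfold Rpower. apply exp_le_mono.
  destruct H as [[H1 H2]|[H1 H2]].
  - have := ln_le0 Hw H1. nra.
  - have := ln_ge0 H1. nra.
Qed.

Lemma rp_le1 w r : 0 < w -> w <= 1 -> 0 <= r -> Rpower w r <= 1.
Proof. intros. rewrite -exp_0. unfold Rpower. apply exp_le_mono.
  have := ln_le0 H H0. nra. Qed.

Lemma rp_ge1 w r : 1 <= w -> 0 <= r -> 1 <= Rpower w r.
Proof. intros. rewrite -exp_0. unfold Rpower. apply exp_le_mono.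
  have := ln_ge0 H. nra. Qed.

Lemma rp_lt1 w r : 1 < w -> r < 0 -> Rpower w r < 1.
Proof. intros. rewrite -exp_0. unfold Rpower. apply exp_increasing.
  have := ln_gt0 H. nra. Qed.

Lemma dcont f x l : derivable_pt_lim f x l -> continuity_pt f x.
Proof. intro H. apply derivable_continuous_pt. exists l. exact H. Qed.

Lemma mono_le (g g' : R -> R) a b c : a <= b ->
  (forall t, a <= t <= b -> continuity_pt g t) ->
  (forall t, a < t < b -> derivable_pt_lim g t (g' t) /\ g' t <= c) ->
  g b - g a <= c * (b - a).
Proof.
  intros Hab Hc Hd. destruct Hab as [Hab|Hab]; last first.
  { subst. lra. }
  set df := fun t => if Rlt_dec a t then if Rlt_dec t b then g' t else c else c.
  have Hmin : Rmin a b = a by apply Rmin_left; lra.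
  have Hmax : Rmax a b = b by apply Rmax_right; lra.
  destruct (MVT_gen g a b df) as [c0 [Hc0 Heq]].
  - rewrite Hmin Hmax. intros t Ht. apply is_derive_Reals.
    unfold df. destruct (Rlt_dec a t) as [r|r]; last lra. destruct (Rlt_dec t b) as [r0|r0]; last lra.
    simpl. exact (proj1 (Hd t (conj r r0))).
  - rewrite Hmin Hmax. exact Hc.
  - rewrite Heq. have : df c0 <= c.
    { unfold df. destruct (Rlt_dec a c0) as [r|r]; [destruct (Rlt_dec c0 b) as [r0|r0]|]; simpl; try lra.
      exact (proj2 (Hd c0 (conj r r0))). }
    intro. nra.
Qed.

Lemma mono_ge (g g' : R -> R) a b c : a <= b ->
  (forall t, a <= t <= b -> continuity_pt g t) ->
  (forall t, a < t < b -> derivable_pt_lim g t (g' t) /\ c <= g' t) ->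
  c * (b - a) <= g b - g a.
Proof.
  intros Hab Hc Hd.
  have := @mono_le (fun t => - g t) (fun t => - g' t) a b (-c) Hab.
  intro H. have : - g b - - g a <= - c * (b - a).
  { apply H.
    - intros t Ht. apply (continuity_pt_opp g). auto.
    - intros t Ht. destruct (Hd t Ht) as [H1 H2]. split; last lra.
      apply (derivable_pt_lim_opp g). auto. }
  lra.
Qed.

Lemma bernoulli w s : 0 < w -> 1 <= s -> 1 + s * (w - 1) <= Rpower w s.
Proof.
  intros Hw Hs.
  set h := fun u => Rpower u s - s * u.
  set h' := fun u => s * Rpower u (s - 1) - s.
  have Hd : forall u, 0 < u -> derivable_pt_lim h u (h' u).
  { intros u Hu. unfold h, h'.
    apply (derivable_pt_lim_minus (fun u => Rpower u s) (fun u => s * u)).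
    - apply derivable_pt_lim_power; auto.
    - have := derivable_pt_lim_scal id s u 1 (derivable_pt_lim_id u).
      rewrite Rmult_1_r. auto. }
  have H1 : Rpower 1 s = 1 by rewrite /Rpower ln_1 Rmult_0_r exp_0.
  destruct (Rle_dec 1 w) as [Hw1|Hw1].
  - have := @mono_ge h h' 1 w 0 Hw1.
    intro H. have : 0 * (w - 1) <= h w - h 1.
    { apply H.
      - intros t Ht. apply (dcont (Hd t ltac:(lra))).
      - intros t Ht. split. apply Hd; lra. unfold h'.
        have := @rp_ge1 t (s-1) ltac:(lra) ltac:(lra). nra. }
    unfold h. rewrite H1. nra.
  - have := @mono_le h h' w 1 0 (Rlt_le _ _ (Rnot_le_lt _ _ Hw1)).
    intro H. have : h 1 - h w <= 0 * (1 - w).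
    { apply H.
      - intros t Ht. apply (dcont (Hd t ltac:(lra))).
      - intros t Ht. split. apply Hd; lra. unfold h'.
        have := @rp_le1 t (s-1) ltac:(lra) ltac:(lra) ltac:(lra). nra. }
    unfold h. rewrite H1. nra.
Qed.

Definition sl {I : Type} (g : I -> R) (l : seq I) := foldr Rplus 0 (map g l).
Lemma sl_nil {I : Type} (g : I -> R) : sl g [::] = 0. Proof. reflexivity. Qed.
Lemma sl_cons {I : Type} (g : I -> R) a l : sl g (a :: l) = g a + sl g l. Proof. reflexivity. Qed.

Lemma sl_plus {I : Type} (g h : I -> R) (l : seq I) : sl (fun i => g i + h i) l = sl g l + sl h l.
Proof. elim: l => [|a l IH]; rewrite ?sl_nil ?sl_cons; [lra|rewrite IH; lra]. Qed.

Lemma sl_minus {I : Type} (g h : I -> R) (l : seq I) : sl (fun i => g i - h i) l = sl g l - sl h l.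
Proof. elim: l => [|a l IH]; rewrite ?sl_nil ?sl_cons; [lra|rewrite IH; lra]. Qed.

Lemma sl_scal {I : Type} c (g : I -> R) (l : seq I) : sl (fun i => c * g i) l = c * sl g l.
Proof. elim: l => [|a l IH]; rewrite ?sl_nil ?sl_cons; [lra|rewrite IH; lra]. Qed.

Lemma sl_const {I : Type} c (l : seq I) : sl (fun _ => c) l = INR (size l) * c.
Proof. elim: l => [|a l IH]; rewrite ?sl_nil ?sl_cons; [simpl; lra|]. change (size (a :: l)) with (S (size l)). rewrite IH S_INR. lra. Qed.

Lemma sl_le {I : Type} (g h : I -> R) (l : seq I) : (forall i, g i <= h i) -> sl g l <= sl h l.
Proof. move=> H. elim: l => [|a l IH]; rewrite ?sl_nil ?sl_cons; [lra|have := H a; lra]. Qed.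

Lemma sl_ge0 {I : Type} (g : I -> R) (l : seq I) : (forall i, 0 <= g i) -> 0 <= sl g l.
Proof. move=> H. elim: l => [|a l IH]; rewrite ?sl_nil ?sl_cons; [lra|have := H a; lra]. Qed.

Lemma sl_ext {I : Type} (g h : I -> R) (l : seq I) : (forall i, g i = h i) -> sl g l = sl h l.
Proof. move=> H. elim: l => [|a l IH]; rewrite ?sl_nil ?sl_cons; [lra|rewrite H IH; lra]. Qed.

Lemma sl_deriv {I : Type} (g g' : I -> R -> R) t (l : seq I) :
  (forall i, derivable_pt_lim (g i) t (g' i t)) ->
  derivable_pt_lim (fun u => sl (fun i => g i u) l) t (sl (fun i => g' i t) l).
Proof.
  move=> H. elim: l => [|a l IH].
  - rewrite sl_nil. apply derivable_pt_lim_const.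
  - rewrite sl_cons. apply (derivable_pt_lim_plus (g a) (fun u => sl (fun i => g i u) l)); auto.
Qed.


Lemma sl_mem (I : eqType) (g : I -> R) l i : (forall j, 0 <= g j) -> i \in l -> g i <= sl g l.
Proof.
  move=> H. elim: l => [|a l IH] //=. rewrite in_cons sl_cons => /orP [/eqP ->|Hi].
  - have := @sl_ge0 _ g l H. lra.
  - have := IH Hi. have := H a. lra.
Qed.

Lemma vsum_sl n (g : 'I_n -> R) : vsum g = sl g (enum 'I_n).
Proof. reflexivity. Qed.

Lemma size_enum_I n : size (enum 'I_n) = n.
Proof. by rewrite size_enum_ord. Qed.

Definition pw (y r : R) := if Rlt_dec 0 y then Rpower y r else 0.

Lemma rp_add x a b : Rpower x a * Rpower x b = Rpower x (a + b).
Proof. by rewrite Rpower_plus. Qed.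

Lemma rp_m1 m s : 0 < m -> Rpower m (s - 1) * m = Rpower m s.
Proof. intro H. rewrite -{2}(Rpower_1 _ H) rp_add. f_equal. ring. Qed.

Lemma rp_mul x y z : 0 < x -> 0 < y -> Rpower (x * y) z = Rpower x z * Rpower y z.
Proof. intros. by rewrite Rpower_mult_distr. Qed.

Lemma term_aux y p : 0 < y -> y * Rpower y p = Rpower (y * y) ((1 + p) / 2).
Proof.
  intro H. rewrite rp_mul // rp_add -{1}(Rpower_1 _ H) rp_add. f_equal. field.
Qed.

Lemma term_id e p : e * sigpow1 p e = pw (e * e) ((1 + p) / 2).
Proof.
  rewrite /sigpow1 /pw.
  destruct (Rlt_dec 0 e) as [H|H].
  - destruct (Rlt_dec 0 (e * e)) as [H2|H2]; last (exfalso; nra).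
    simpl. by rewrite term_aux.
  - destruct (Rlt_dec e 0) as [H1|H1].
    + destruct (Rlt_dec 0 (e * e)) as [H2|H2]; last (exfalso; nra).
      simpl. have -> : e * e = (- e) * (- e) by ring.
      rewrite -term_aux; [ring|lra].
    + simpl. have -> : e = 0 by lra.
      destruct (Rlt_dec 0 (0 * 0)) as [H2|H2]; [exfalso; lra|simpl; ring].
Qed.

Lemma pw_ge0 y r : 0 <= pw y r.
Proof. rewrite /pw. destruct (Rlt_dec 0 y); simpl; [left; apply rp_pos|lra]. Qed.

Lemma pw_pos y r : 0 < y -> pw y r = Rpower y r.
Proof. intro H. rewrite /pw. by destruct (Rlt_dec 0 y). Qed.
Lemma pw_npos y r : ~ 0 < y -> pw y r = 0.
Proof. intro H. rewrite /pw. by destruct (Rlt_dec 0 y). Qed.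

Lemma vsum_mem n (a : 'I_n -> R) i : (forall j, 0 <= a j) -> a i <= vsum a.
Proof. intro H. rewrite vsum_sl. apply sl_mem => //. by rewrite mem_enum. Qed.

Lemma L1 n (a : 'I_n -> R) r : (forall i, 0 <= a i) -> 0 < vsum a -> 0 < r <= 1 ->
  Rpower (vsum a) r <= vsum (fun i => pw (a i) r).
Proof.
  intros Ha HA Hr. set A := vsum a.
  have E : vsum (fun i => (Rpower A r * / A) * a i) = Rpower A r.
  { rewrite !vsum_sl sl_scal -vsum_sl -/A. field. unfold A; lra. }
  rewrite -{1}E !vsum_sl. apply sl_le => i.
  have Hai := vsum_mem i Ha. rewrite -/A in Hai.
  destruct (Rlt_dec 0 (a i)) as [H|H].
  - rewrite pw_pos //.
    have HAp : 0 < A by unfold A; lra.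
    have Hw : 0 < a i / A by apply Rdiv_lt_0_compat; lra.
    have Eq : Rpower (a i) r = Rpower A r * Rpower (a i / A) r.
    { rewrite -rp_mul //. f_equal. field. lra. }
    have H1 : a i / A <= 1.
    { apply (Rmult_le_reg_r A); [lra|]. have -> : a i / A * A = a i by field; lra. lra. }
    have := rp_ge_self (w := a i / A) (r := r) Hw (or_introl (conj H1 (proj2 Hr))).
    have := rp_pos A r. intros.
    rewrite Eq. have -> : Rpower A r * / A * a i = Rpower A r * (a i / A) by field; lra.
    apply Rmult_le_compat_l; lra.
  - rewrite pw_npos //. have -> : a i = 0 by have := Ha i; lra. lra.
Qed.

Lemma tangent m s a : 0 < m -> 1 <= s -> 0 <= a ->
  Rpower m s + s * Rpower m (s - 1) * (a - m) <= pw a s.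
Proof.
  intros Hm Hs Ha.
  have Hm1 := rp_m1 s Hm.
  have Hp := rp_pos m s.
  destruct (Rlt_dec 0 a) as [H|H].
  - rewrite pw_pos //.
    have Hw : 0 < a / m by apply Rdiv_lt_0_compat.
    have Eq : Rpower a s = Rpower m s * Rpower (a / m) s.
    { rewrite -rp_mul //. f_equal. field. lra. }
    have B := bernoulli Hw Hs.
    have -> : s * Rpower m (s - 1) * (a - m) = s * (Rpower m (s - 1) * m) * (a / m - 1)
      by field; lra.
    rewrite Hm1 Eq.
    have : Rpower m s * (1 + s * (a / m - 1)) <= Rpower m s * Rpower (a / m) s
      by apply Rmult_le_compat_l; lra.
    nra.
  - rewrite pw_npos //.
    have -> : a = 0 by lra.
    have -> : s * Rpower m (s - 1) * (0 - m) = - s * (Rpower m (s - 1) * m) by ring.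
    rewrite Hm1. nra.
Qed.

Lemma L2 n (a : 'I_n -> R) s : (forall i, 0 <= a i) -> 0 < vsum a -> 1 <= s ->
  Rpower (INR n) (1 - s) * Rpower (vsum a) s <= vsum (fun i => pw (a i) s).
Proof.
  intros Ha HA Hs. set A := vsum a in HA *.
  have HN : 0 < INR n.
  { destruct n as [|k]; last (apply lt_0_INR; apply/ltP; by []).
    exfalso. move: HA. rewrite /A vsum_sl.
    have := size_enum_I 0. move/size0nil => ->. rewrite sl_nil. lra. }
  set N := INR n in HN *.
  set m := A / N.
  have Hm : 0 < m by apply Rdiv_lt_0_compat.
  set c1 := s * Rpower m (s - 1).
  have E : vsum (fun i => Rpower m s + s * Rpower m (s - 1) * (a i - m)) = N * Rpower m s.
  { rewrite vsum_sl.
    rewrite (sl_ext (h := fun i => (Rpower m s - c1 * m) + c1 * a i)); last first.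
    { intro i. rewrite /c1. ring. }
    rewrite sl_plus sl_const sl_scal size_enum_I -vsum_sl -/A -/N.
    rewrite /m. field. lra. }
  have E2 : N * Rpower m s = Rpower N (1 - s) * Rpower A s.
  { rewrite /m /Rdiv rp_mul //; last by apply Rinv_0_lt_compat.
    have -> : Rpower (/ N) s = Rpower N (- s).
    { rewrite /Rpower ln_Rinv //. f_equal. ring. }
    rewrite -{1}(Rpower_1 _ HN).
    have -> : Rpower N 1 * (Rpower A s * Rpower N (- s)) = Rpower A s * (Rpower N 1 * Rpower N (- s)) by ring.
    rewrite rp_add. have -> : 1 + - s = 1 - s by ring. ring. }
  rewrite -E2 -E !vsum_sl. apply sl_le => i. apply tangent => //.
Qed.

Lemma dlim_ext (f g : R -> R) t l l' : (forall u, f u = g u) -> l = l' ->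
  derivable_pt_lim f t l -> derivable_pt_lim g t l'.
Proof.
  intros H Hl Hd eps Heps. destruct (Hd eps Heps) as [d Hdd]. exists d.
  intros h Hh Hh2. rewrite -!H -Hl. auto.
Qed.

Lemma cont_ext (f g : R -> R) t : (forall u, f u = g u) ->
  continuity_pt f t -> continuity_pt g t.
Proof.
  intros H Hc eps Heps. destruct (Hc eps Heps) as [d [Hd Hdd]]. exists d. split => //.
  intros u Hu. rewrite -!H. auto.
Qed.

Lemma local_deriv g t l : 0 < t -> derivable_pt_lim g t l ->
  derivable_pt_lim (fun u => g (Rmax u 0)) t l.
Proof.
  intros Ht Hd eps Heps. destruct (Hd eps Heps) as [d Hdd].
  have Hp : 0 < Rmin d t by apply Rmin_pos; [apply cond_pos|lra].
  exists (mkposreal _ Hp). intros h Hh Hh2. simpl in Hh2.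
  have H1 := Rmin_l d t. have H2 := Rmin_r d t.
  have Ha : Rabs h < t by lra.
  have Hb : 0 < t + h by move: Ha; unfold Rabs; destruct (Rcase_abs h); lra.
  rewrite (Rmax_left (t + h)) ?(Rmax_left t); try lra.
  apply Hdd => //. lra.
Qed.

Lemma cont_max0 (g : R -> R) t : 0 <= t ->
  (forall u, 0 < u -> exists l, derivable_pt_lim g u l) ->
  (forall eps, 0 < eps -> exists d, 0 < d /\ forall u, 0 <= u < d -> Rabs (g u - g 0) < eps) ->
  continuity_pt (fun u => g (Rmax u 0)) t.
Proof.
  intros Ht Hd Hr. unfold continuity_pt, continue_in, limit1_in, limit_in.
  simpl. unfold R_dist. intros eps Heps.
  destruct Ht as [Ht|Ht].
  - destruct (Hd t Ht) as [l Hl]. have Hc := dcont Hl.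
    destruct (Hc eps Heps) as [a [Ha Haa]]. simpl in Haa. unfold R_dist in Haa.
    exists (Rmin a t). split. apply Rmin_pos; lra.
    intros u [HD Hu]. have H1 := Rmin_l a t. have H2 := Rmin_r a t.
    have Hu0 : 0 < u by move: Hu; unfold Rabs; destruct (Rcase_abs (u - t)); lra.
    rewrite (Rmax_left u) ?(Rmax_left t); try lra.
    apply Haa. split => //. lra.
  - subst. destruct (Hr eps Heps) as [d [Hd0 Hdd]]. exists d. split => //.
    intros u [_ Hu]. rewrite Rminus_0_r in Hu. rewrite (Rmax_left 0); [|lra].
    apply Hdd. split. apply Rmax_r. unfold Rmax. destruct (Rle_dec u 0); [lra|].
    move: Hu; unfold Rabs; destruct (Rcase_abs u); lra.
Qed.

Lemma sl_cont (I : Type) (g : I -> R -> R) t l : (forall i, continuity_pt (g i) t) ->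
  continuity_pt (fun u => sl (fun i => g i u) l) t.
Proof.
  move=> H. elim: l => [|a l IH].
  - apply (cont_ext (f := fun _ => 0)). by intro. apply continuity_pt_const. by intros ? ?.
  - apply (cont_ext (f := (g a + (fun u => sl (fun i => g i u) l))%F)). by intro.
    apply continuity_pt_plus; auto.
Qed.

Unset Implicit Arguments.
Set Strict Implicit.

Theorem theorem3 (n : nat) (f : vec n -> vec n) (delta eps1 eps2 p q : R)
  (s x : R -> vec n) :
  0 < delta -> QUAD f delta ->
  0 < eps1 -> 0 < eps2 -> 0 < p -> p < 1 -> 1 < q ->
  is_solution (fun _ v => f v) s ->
  is_solution
    (fun t v => fun i =>
       f v i - eps1 * sigpow p (vsub v (s t)) i
             - eps2 * sigpow q (vsub v (s t)) i) x ->
  let alpha := eps1 * Rpower 2 ((1 + p) / 2) in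
  let beta := eps2 * Rpower (INR n) ((1 - q) / 2) * Rpower 2 ((1 + q) / 2) in
  alpha - 2 * delta > 0 -> beta - 2 * delta > 0 ->
  forall t, t >= 2 / ((alpha - 2 * delta) * (1 - p))
                 + 2 / ((beta - 2 * delta) * (q - 1)) ->
  forall i : 'I_n, x t i = s t i.
Proof.
  intros Hd HQ He1 He2 Hp Hp1 Hq [Hs1 Hs2] [Hx1 Hx2] alpha beta Ha Hb t Ht i.
  set e := fun u j => x (Rmax u 0) j - s (Rmax u 0) j.
  set U := fun u => vsum (fun j => e u j * e u j) / 2.
  set ee := fun u j => x u j - s u j.
  set de := fun u j => (f (x u) j - eps1 * sigpow p (vsub (x u) (s u)) j
                        - eps2 * sigpow q (vsub (x u) (s u)) j) - f (s u) j.
  set D := fun u => vsum (fun j => ee u j * de u j).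
  have He : forall u j, 0 < u -> e u j = ee u j.
  { intros u j Hu. by rewrite /e /ee Rmax_left; [|lra]. }
  have F1 : forall u, 0 <= u -> continuity_pt U u.
  { intros u Hu. rewrite /U.
    apply (cont_ext (f := fun u => /2 * sl (fun j => e u j * e u j) (enum 'I_n))).
    { intro v. rewrite vsum_sl. field. }
    apply (continuity_pt_scal (fun u => sl (fun j => e u j * e u j) (enum 'I_n))).
    apply sl_cont => j.
    have Hej : continuity_pt (fun u => e u j) u.
    { apply (cont_ext (f := (fun u => x (Rmax u 0) j) - (fun u => s (Rmax u 0) j))%F). by intro.
      apply continuity_pt_minus.
      - apply (cont_max0 (g := fun u => x u j)) => //.
        + intros v Hv. eexists. apply Hx1 => //.
        + apply Hx2.
      - apply (cont_max0 (g := fun u => s u j)) => //.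
        + intros v Hv. eexists. apply Hs1 => //.
        + apply Hs2. }
    apply (cont_ext (f := ((fun u => e u j) * (fun u => e u j))%F)). by intro.
    apply continuity_pt_mult; auto. }
  have F2 : forall u, 0 < u -> derivable_pt_lim U u (D u).
  { intros u Hu.
    have Hej : forall j, derivable_pt_lim (fun v => e v j) u (de u j).
    { intro j. apply (dlim_ext (f := ((fun v => x (Rmax v 0) j) - (fun v => s (Rmax v 0) j))%F)
        (l := (f (x u) j - eps1 * sigpow p (vsub (x u) (s u)) j
                        - eps2 * sigpow q (vsub (x u) (s u)) j) - f (s u) j)) => //.
      apply derivable_pt_lim_minus.
      - apply (local_deriv (g := fun v => x v j)) => //. apply (Hx1 u Hu j).
      - apply (local_deriv (g := fun v => s v j)) => //. apply (Hs1 u Hu j). }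
    apply (dlim_ext (f := mult_real_fct (/2) (fun v => sl (fun j => e v j * e v j) (enum 'I_n)))
       (l := /2 * sl (fun j => de u j * e u j + e u j * de u j) (enum 'I_n))).
    { intro v. rewrite /mult_real_fct /U vsum_sl. field. }
    { rewrite /D vsum_sl -sl_scal. apply sl_ext => j. rewrite He //. move: (de u j) (ee u j) => a b. field. }
    apply derivable_pt_lim_scal.
    apply (sl_deriv (g := fun j v => e v j * e v j) (g' := fun j v => de v j * e v j + e v j * de v j)).
    intro j. apply (dlim_ext (f := ((fun v => e v j) * (fun v => e v j))%F) (l := de u j * e u j + e u j * de u j)) => //.
    apply derivable_pt_lim_mult; auto. }
  set P := (1 + p) / 2. set Qe := (1 + q) / 2.
  set V := fun u => vsum (fun j => ee u j * ee u j).
  set Sp := fun u => vsum (fun j => pw (ee u j * ee u j) P).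
  set Sq := fun u => vsum (fun j => pw (ee u j * ee u j) Qe).
  have HUV : forall u, 0 < u -> U u = V u / 2.
  { intros u Hu. rewrite /U /V !vsum_sl. f_equal. apply sl_ext => j. by rewrite He. }
  have F3 : forall u, 0 < u -> D u <= delta * V u - eps1 * Sp u - eps2 * Sq u.
  { intros u Hu.
    have Q : vsum (fun j => ee u j * (f (x u) j - f (s u) j)) <= delta * V u := HQ (x u) (s u).
    have -> : D u = vsum (fun j => ee u j * (f (x u) j - f (s u) j)) - eps1 * Sp u - eps2 * Sq u.
    { rewrite /D /Sp /Sq !vsum_sl -!sl_scal -!sl_minus. apply sl_ext => j.
      rewrite /P /Qe -!term_id /de /ee /sigpow /vsub. ring. }
    lra. }
  have V0 : forall u, 0 <= V u.
  { intro u. rewrite /V vsum_sl. apply sl_ge0 => j. nra. }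
  have Sp0 : forall u, 0 <= Sp u.
  { intro u. rewrite /Sp vsum_sl. apply sl_ge0 => j. apply pw_ge0. }
  have Sq0 : forall u, 0 <= Sq u.
  { intro u. rewrite /Sq vsum_sl. apply sl_ge0 => j. apply pw_ge0. }
  have F4 : forall u, 0 < u -> 0 < U u ->
     D u <= 2 * delta * U u - alpha * Rpower (U u) P - beta * Rpower (U u) Qe.
  { intros u Hu HU. have HV : 0 < V u by rewrite HUV in HU; lra.
    have H1 : Rpower (V u) P <= Sp u.
    { apply (L1 (a := fun j => ee u j * ee u j)) => //.
      - intro j. nra.
      - rewrite /P; lra. }
    have H2 : Rpower (INR n) (1 - Qe) * Rpower (V u) Qe <= Sq u.
    { apply (L2 (a := fun j => ee u j * ee u j)) => //.
      - intro j. nra.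
      - rewrite /Qe; lra. }
    have EV : V u = 2 * U u by rewrite HUV; lra.
    rewrite EV rp_mul in H1; [|lra|lra].
    rewrite EV rp_mul in H2; [|lra|lra].
    have E3 : 1 - Qe = (1 - q) / 2 by rewrite /Qe; field.
    rewrite E3 in H2.
    have := F3 u Hu. rewrite EV /alpha /beta /P /Qe.
    rewrite /P /Qe in H1 H2.
    nra. }
  have Hal : 0 < alpha by lra.
  have Hbe : 0 < beta by lra.
  have HP1 : P <= 1 by rewrite /P; lra.
  have HQ1 : 1 <= Qe by rewrite /Qe; lra.
  have F5 : forall u, 0 < u -> D u <= 0.
  { intros u Hu. destruct (V0 u) as [HV|HV].
    - have HU : 0 < U u by rewrite HUV; lra.
      have := F4 u Hu HU.
      have := rp_pos (U u) P. have := rp_pos (U u) Qe.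
      destruct (Rle_dec (U u) 1) as [H1|H1].
      + have := rp_ge_self (w := U u) (r := P) HU (or_introl (conj H1 HP1)).
        nra.
      + have := rp_ge_self (w := U u) (r := Qe) HU (or_intror (conj (Rlt_le _ _ (Rnot_le_lt _ _ H1)) HQ1)).
        nra.
    - have := F3 u Hu. rewrite -HV. have := Sp0 u. have := Sq0 u. nra. }
  have F6 : forall a b, 0 <= a -> a <= b -> U b <= U a.
  { intros a b Ha0 Hab.
    have := @mono_le U D a b 0 Hab.
    intro H. have : U b - U a <= 0 * (b - a).
    { apply H.
      - intros u Hu. apply F1. lra.
      - intros u Hu. split. apply F2; lra. apply F5; lra. }
    lra. }
  destruct (Req_dec (x t i) (s t i)) as [Heq|Hne]; first exact Heq.
  exfalso.
  set a := alpha - 2 * delta. set b := beta - 2 * delta.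
  set T1 := 2 / (b * (q - 1)). set T2 := 2 / (a * (1 - p)).
  have HT1 : 0 < T1 by apply Rdiv_lt_0_compat; [lra|apply Rmult_lt_0_compat; rewrite /b; lra].
  have HT2 : 0 < T2 by apply Rdiv_lt_0_compat; [lra|apply Rmult_lt_0_compat; rewrite /a; lra].
  have Ht' : t >= T2 + T1 by exact Ht.
  have Htp : 0 < t by lra.
  have HUt : 0 < U t.
  { rewrite HUV //. have := @vsum_mem n (fun j => ee t j * ee t j) i ltac:(intro j; nra).
    have : ee t i <> 0 by rewrite /ee; lra.
    intros. have : 0 < ee t i * ee t i by nra. rewrite /V. lra. }
  have Ph1 : exists t1, 0 <= t1 <= T1 /\ U t1 <= 1.
  { destruct (Rle_dec (U T1) 1) as [H|H]; first by exists T1; split; [lra|].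
    exfalso. have UT1 : 1 < U T1 by lra.
    have Ubig : forall u, 0 <= u <= T1 -> 1 < U u.
    { intros u Hu. have := F6 u T1 ltac:(lra) ltac:(lra). lra. }
    set nu := (q - 1) / 2.
    have Hnu : 0 < nu by rewrite /nu; lra.
    have := @mono_ge (fun u => Rpower (U u) (- nu))
                      (fun u => (- nu * Rpower (U u) (- nu - 1)) * D u) 0 T1 (nu * b) ltac:(lra).
    intro H0. have Hm : nu * b * (T1 - 0) <= Rpower (U T1) (- nu) - Rpower (U 0) (- nu).
    { apply H0.
      - intros u Hu.
        apply (cont_ext (f := comp (fun y => Rpower y (- nu)) U)). by intro.
        apply continuity_pt_comp. apply F1; lra.
        have HUu : 0 < U u by have := Ubig u Hu; lra.
        apply (dcont (derivable_pt_lim_power (U u) (- nu) HUu)).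
      - intros u Hu. have HU1 := Ubig u ltac:(lra). split.
        + apply (dlim_ext (f := comp (fun y => Rpower y (- nu)) U) (l := (- nu * Rpower (U u) (- nu - 1)) * D u)) => //.
          apply derivable_pt_lim_comp. apply F2; lra.
          apply derivable_pt_lim_power. lra.
        + have HUp : 0 < U u by lra.
          have E1 : Rpower (U u) (- nu - 1) * U u = Rpower (U u) (- nu) by apply rp_m1.
          have E2 : Rpower (U u) (- nu - 1) * Rpower (U u) Qe = 1.
          { rewrite rp_add. have -> : - nu - 1 + Qe = 0 by rewrite /nu /Qe; field.
            apply Rpower_O; lra. }
          have Z1 : Rpower (U u) (- nu) < 1 by apply rp_lt1; lra.
          have R1p := rp_pos (U u) (- nu - 1).
          have HPp := rp_pos (U u) P.
          have HD := F4 u ltac:(lra) HUp.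
          have K : nu * Rpower (U u) (- nu - 1) * D u <=
                   nu * Rpower (U u) (- nu - 1) * (2 * delta * U u - beta * Rpower (U u) Qe).
          { apply Rmult_le_compat_l. nra. nra. }
          have EK : nu * Rpower (U u) (- nu - 1) * (2 * delta * U u - beta * Rpower (U u) Qe)
                  = nu * (2 * delta * (Rpower (U u) (- nu - 1) * U u)
                          - beta * (Rpower (U u) (- nu - 1) * Rpower (U u) Qe)) by ring.
          rewrite EK E1 E2 in K.
          have : nu * (2 * delta * Rpower (U u) (- nu)) <= nu * (2 * delta).
          { apply Rmult_le_compat_l; [lra|]. nra. }
          rewrite /b. lra. }
    have E : nu * b * (T1 - 0) = 1 by rewrite /nu /T1; field; split; rewrite /b; lra.
    have := rp_pos (U 0) (- nu).
    have : Rpower (U T1) (- nu) < 1 by apply rp_lt1; lra.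
    lra. }
  destruct Ph1 as [t1 [Ht1 Ut1]].
  have Upos : forall u, t1 <= u <= t -> 0 < U u /\ U u <= 1.
  { intros u Hu. split.
    - have := F6 u t ltac:(lra) ltac:(lra). lra.
    - have := F6 t1 u ltac:(lra) ltac:(lra). lra. }
  set mu := (1 - p) / 2.
  have Hmu : 0 < mu by rewrite /mu; lra.
  have := @mono_le (fun u => Rpower (U u) mu)
                    (fun u => (mu * Rpower (U u) (mu - 1)) * D u) t1 t (- (mu * a)) ltac:(lra).
  intro H0. have Hm : Rpower (U t) mu - Rpower (U t1) mu <= - (mu * a) * (t - t1).
  { apply H0.
    - intros u Hu.
      apply (cont_ext (f := comp (fun y => Rpower y mu) U)). by intro.
      apply continuity_pt_comp. apply F1; lra.
      have HUu : 0 < U u by have := Upos u Hu; lra.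
      apply (dcont (derivable_pt_lim_power (U u) mu HUu)).
    - intros u Hu. have [HUp HU1] := Upos u ltac:(lra). split.
      + apply (dlim_ext (f := comp (fun y => Rpower y mu) U) (l := (mu * Rpower (U u) (mu - 1)) * D u)) => //.
        apply derivable_pt_lim_comp. apply F2; lra.
        apply derivable_pt_lim_power. lra.
      + have E1 : Rpower (U u) (mu - 1) * U u = Rpower (U u) mu by apply rp_m1.
        have E2 : Rpower (U u) (mu - 1) * Rpower (U u) P = 1.
        { rewrite rp_add. have -> : mu - 1 + P = 0 by rewrite /mu /P; field.
          apply Rpower_O; lra. }
        have W1 : Rpower (U u) mu <= 1 by apply rp_le1; lra.
        have R1p := rp_pos (U u) (mu - 1).
        have HQp := rp_pos (U u) Qe.
        have HD := F4 u ltac:(lra) HUp.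
        have K : mu * Rpower (U u) (mu - 1) * D u <=
                 mu * Rpower (U u) (mu - 1) * (2 * delta * U u - alpha * Rpower (U u) P).
        { apply Rmult_le_compat_l. nra. nra. }
        have EK : mu * Rpower (U u) (mu - 1) * (2 * delta * U u - alpha * Rpower (U u) P)
                = mu * (2 * delta * (Rpower (U u) (mu - 1) * U u)
                        - alpha * (Rpower (U u) (mu - 1) * Rpower (U u) P)) by ring.
        rewrite EK E1 E2 in K.
        have : mu * (2 * delta * Rpower (U u) mu) <= mu * (2 * delta).
        { apply Rmult_le_compat_l; [lra|]. nra. }
        rewrite /a. lra. }
  have E : mu * a * T2 = 1 by rewrite /mu /T2; field; split; rewrite /a; lra.
  have : mu * a * T2 <= mu * a * (t - t1).
  { apply Rmult_le_compat_l. have : 0 < a by rewrite /a; lra. nra. lra. }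
  have := rp_pos (U t) mu.
  have : Rpower (U t1) mu <= 1 by apply rp_le1; [have := Upos t1 ltac:(lra); lra|lra|lra].
  lra.
Qed.
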